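(* Let $(X,\widetilde{\tau},\mathfrak{a}_E,E)$ be a soft aura topological space. The collection $\widetilde{\tau}_{\mathfrak{a}}=\{(G,E)\in\mathrm{SS}(X,E):\mathrm{int}_{\mathfrak{a}}(G,E)=(G,E)\}$ is a soft topology on $X$ with parameter set $E$.
   Context: Let $X$ be a nonempty set and $E$ a nonempty parameter set. A soft set over $X$ is a map $F:E\to\mathcal{P}(X)$, written $(F,E)$; $\mathrm{SS}(X,E)$ denotes all soft sets. Operations ($\sqsubseteq$, soft union $\sqcup$, soft intersection $\sqcap$) are parameterwise. A soft topology is a subfamily of $\mathrm{SS}(X,E)$ containing the null soft set $\widetilde{\Phi}$ (all values $\emptyset$) and the absolute soft set $\widetilde{X}$ (all values $X$), closed under arbitrary soft unions and finite soft intersections. A soft scope function on a soft topology $\widetilde{\tau}$ is a map $\mathfrak{a}_E:X\to\widetilde{\tau}$ with $x\in\mathfrak{a}_E(x)(e)$ for all $x\in X$, $e\in E$; $(X,\widetilde{\tau},\mathfrak{a}_E,E)$ is a soft aura topological space. Soft aura-interior: $\mathrm{int}_{\mathfrak{a}}(G,E)(e)=\{x\in X:\mathfrak{a}_E(x)(e)\subseteq G(e)\}$. *)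

(* Defs.v *)
Definition soft_set (X E : Type) : Type := E -> X -> Prop.

Definition soft_subset {X E : Type} (F G : soft_set X E) : Prop :=
  forall e x, F e x -> G e x.

Definition null_soft {X E : Type} : soft_set X E := fun _ _ => False.
Definition absolute_soft {X E : Type} : soft_set X E := fun _ _ => True.

Definition soft_Union {X E : Type} (S : soft_set X E -> Prop) : soft_set X E :=
  fun e x => exists F, S F /\ F e x.

Definition soft_inter {X E : Type} (F G : soft_set X E) : soft_set X E :=
  fun e x => F e x /\ G e x.

Definition soft_eq {X E : Type} (F G : soft_set X E) : Prop :=
  forall e x, F e x <-> G e x.

(* A soft topology: a family of soft sets containing the null and absolute
   soft sets, closed under arbitrary soft unions and finite (binary) soft
   intersections (binary closure is equivalent to finite closure given
   that the absolute soft set belongs to tau). *)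
Definition soft_topology {X E : Type} (tau : soft_set X E -> Prop) : Prop :=
  tau null_soft /\
  tau absolute_soft /\
  (forall S : soft_set X E -> Prop,
      (forall F, S F -> tau F) -> tau (soft_Union S)) /\
  (forall F G, tau F -> tau G -> tau (soft_inter F G)).

Definition soft_scope {X E : Type} (tau : soft_set X E -> Prop)
  (a : X -> soft_set X E) : Prop :=
  (forall x, tau (a x)) /\ (forall x e, a x e x).

Definition soft_aura_int {X E : Type} (a : X -> soft_set X E)
  (G : soft_set X E) : soft_set X E :=
  fun e x => forall y, a x e y -> G e y.

Definition tau_aura {X E : Type} (a : X -> soft_set X E) (G : soft_set X E) : Prop :=
  soft_eq (soft_aura_int a G) G.

(* Main.v *)
Require Import Defs.

Theorem theorem3p13 (X E : Type) (hX : inhabited X) (hE : inhabited E)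
  (tau : soft_set X E -> Prop) (a : X -> soft_set X E) :
  soft_topology tau -> soft_scope tau a ->
  soft_topology (tau_aura a).
Proof.
  intros _ [_ Ha].
  unfold soft_topology, tau_aura, soft_eq, soft_aura_int.
  split; [|split; [|split]].
  - intros e x; unfold null_soft; split; [intros H; exact (H x (Ha x e)) | tauto].
  - intros e x; unfold absolute_soft; split; auto.
  - intros S HS e x; unfold soft_Union; split.
    + intros H; exact (H x (Ha x e)).
    + intros [F [SF Fx]] y Hy. exists F; split; auto.
      apply (proj2 (HS F SF e x) Fx y Hy).
  - intros F G HF HG e x; unfold soft_inter; split.
    + intros H; exact (H x (Ha x e)).
    + intros [Fx Gx] y Hy; split.
      * apply (proj2 (HF e x) Fx y Hy).
      * apply (proj2 (HG e x) Gx y Hy).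
Qed.
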